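(* For any instance of MPMD or MBPMD, the total waiting cost incurred by Greedy Dual equals $\sum_{S\subseteq V}\mathrm{sur}(S)\,y_S(T)$, where $V$ is the set of all requests and $T$ is the time at which Greedy Dual matches the last request.
   Context: Problem (MPMD / MBPMD). Let $(\mathcal{X},\mathrm{dist})$ be a metric space. An instance consists of $2m$ requests $u_1,\dots,u_{2m}$. Each request $u$ is a triple $(\mathrm{pos}(u),\mathrm{atime}(u),\mathrm{sgn}(u))$, where $\mathrm{pos}(u)\in\mathcal{X}$ is its location and $\mathrm{atime}(u)\ge0$ is its arrival time, with arrival times nondecreasing. In MPMD, $\mathrm{sgn}(u)=0$ for all requests. In MBPMD, exactly $m$ requests have sign $+1$ and $m$ have sign $-1$. At time $\tau$, an algorithm may match two arrived, unmatched requests $u,v$ with $\mathrm{sgn}(u)=-\mathrm{sgn}(v)$, at cost $\mathrm{dist}(\mathrm{pos}(u),\mathrm{pos}(v))$ (connection cost) plus $(\tau-\mathrm{atime}(u))+(\tau-\mathrm{atime}(v))$ (waiting costs). All requests must eventually be matched. The total waiting cost of an algorithm is the sum, over all requests, of the time between the request's arrival and the moment it is matched. Notation. Edges are unordered pairs $\{u,v\}$ of distinct requests with $\mathrm{sgn}(u)=-\mathrm{sgn}(v)$. For a set $S$ of requests, $\delta(S)$ is the set of edges with exactly one endpoint in $S$. In MPMD, $\mathrm{sur}(S)=|S|\bmod 2$; in MBPMD, $\mathrm{sur}(S)=|\sum_{u\in S}\mathrm{sgn}(u)|$. For an edge $e=(u,v)$, $\mathrm{cost}(e)=\mathrm{dist}(\mathrm{pos}(u),\mathrm{pos}(v))+|\mathrm{atime}(u)-\mathrm{atime}(v)|$.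 Algorithm Greedy Dual (GD). GD maintains a dual variable $y_S\ge0$ for every set $S$ of already-arrived requests; $y_S(\tau)$ denotes its value at time $\tau$. It also maintains a partition of the arrived requests into active sets, with $\mathcal{A}(u)$ denoting the active set containing $u$. An active set is growing if it contains at least one free request, and non-growing otherwise. - When a request $u$ arrives, $\mathcal{A}(u)\leftarrow\{u\}$ becomes a new active set, and $y_S\leftarrow 0$ for every new set $S$ containing $u$. - Tight-constraint event: while there is an edge $e=(u,v)$ between arrived requests with $\mathcal{A}(u)\neq\mathcal{A}(v)$ and $\sum_{S:\,e\in\delta(S)}y_S=\mathrm{cost}(e)$, GD does the following. It merges the two sets: $S=\mathcal{A}(u)\cup\mathcal{A}(v)$ becomes active and $\mathcal{A}(w)\leftarrow S$ for all $w\in S$, while $\mathcal{A}(u)$ and $\mathcal{A}(v)$ become inactive. It marks the edge $e$. Then, while there are free $u',v'\in S$ with $\mathrm{sgn}(u')=-\mathrm{sgn}(v')$, it matches $u'$ with $v'$ at the current time. - At all other times, $y_S$ increases continuously at rate $1$ (the same rate as time) for every active growing set $S$; all other dual variables stay constant. *)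

(* Defs.v *)
From HB Require Import structures.
From mathcomp Require Import all_boot all_order all_algebra.
Set Implicit Arguments.
Unset Strict Implicit.
Unset Printing Implicit Defensive.
Import Order.TTheory GRing.Theory Num.Theory.
Local Open Scope ring_scope.

Definition is_metric (R : realFieldType) (X : Type) (dist : X -> X -> R) : Prop :=
  [/\ (forall x y, 0 <= dist x y),
      (forall x y, dist x y = 0 <-> x = y),
      (forall x y, dist x y = dist y x)
    & (forall x y z, dist x z <= dist x y + dist y z)].

Section GreedyDual.

Variables (R : realFieldType) (X : Type) (dist : X -> X -> R).
(* bip = false : MPMD ;  bip = true : MBPMD *)
Variable bip : bool.
(* 2m requests u_1..u_{2m}, represented by 'I_(2*m) in arrival order *)
Variable m : nat.
Local Notation req := 'I_(2 * m).
Variables (pos : req -> X) (atime : req -> R) (sgn : req -> int).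

Definition valid_instance : Prop :=
  [/\ (forall u, 0 <= atime u),
      (forall u v : req, (val u <= val v)%N -> atime u <= atime v)
    & (if bip then
         [/\ (forall u, sgn u = 1 \/ sgn u = -1),
             #|[set u | sgn u == 1]| = m
           & #|[set u | sgn u == -1]| = m]
       else forall u, sgn u = 0)].

Definition sur (S : {set req}) : nat :=
  if bip then absz (\sum_(u in S) sgn u) else (#|S| %% 2)%N.

Definition edge (u v : req) : bool := (u != v) && (sgn u == - sgn v).

Definition cost (u v : req) : R := dist (pos u) (pos v) + `|atime u - atime v|.

(* sum of y_S over the sets S with e = {u,v} in delta(S) *)
Definition load (y : {set req} -> R) (u v : req) : R :=
  \sum_(S : {set req} | (u \in S) != (v \in S)) y S.

Record state := mkState {
  now : R;
  narr : nat;                  (* the first narr requests have arrived *)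
  act : req -> {set req};      (* A(u), for arrived u *)
  yv : {set req} -> R;
  freereq : {set req};
  mtime : req -> R             (* time at which a matched request was matched *)
}.

Definition arrived (s : state) : {set req} := [set u : req | (val u < narr s)%N].

Definition init_state : state :=
  mkState 0 0 (fun _ => set0) (fun _ => 0) set0 (fun _ => 0).

Definition can_match (s : state) (u v : req) : Prop :=
  [/\ u \in freereq s, v \in freereq s, u != v, sgn u = - sgn v & act s u = act s v].

Definition matchable (s : state) : Prop := exists u v, can_match s u v.

Definition cross_edge (s : state) (u v : req) : Prop :=
  [/\ u \in arrived s, v \in arrived s, edge u v & act s u != act s v].

Definition tight (s : state) (u v : req) : Prop :=
  cross_edge s u v /\ load (yv s) u v = cost u v.

Definition growing (s : state) (S : {set req}) : bool :=
  [exists u in arrived s, act s u == S] && [exists w in freereq s, w \in S].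

Definition arrive_result (s : state) (k : req) : state :=
  mkState (now s) (narr s).+1
    (fun w => if w == k then [set k] else act s w) (yv s) (k |: freereq s) (mtime s).

Definition merge_result (s : state) (u v : req) : state :=
  let S := act s u :|: act s v in
  mkState (now s) (narr s) (fun w => if w \in S then S else act s w)
    (yv s) (freereq s) (mtime s).

Definition match_result (s : state) (u v : req) : state :=
  mkState (now s) (narr s) (act s) (yv s) (freereq s :\ u :\ v)
    (fun w => if (w == u) || (w == v) then now s else mtime s w).

Definition grow_y (s : state) (d : R) : {set req} -> R :=
  fun S => if growing s S then yv s S + d else yv s S.

Definition grow_result (s : state) (d : R) : state :=
  mkState (now s + d) (narr s) (act s) (grow_y s d) (freereq s) (mtime s).

Inductive step : state -> state -> Prop :=
| StepArrive s k :
    ~ matchable s -> val k = narr s -> atime k = now s ->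
    step s (arrive_result s k)
| StepTight s u v :
    ~ matchable s -> tight s u v ->
    step s (merge_result s u v)
| StepMatch s u v :
    can_match s u v ->
    step s (match_result s u v)
| StepGrow s d :
    0 < d -> ~ matchable s ->
    (forall u v, cross_edge s u v -> load (yv s) u v < cost u v) ->
    (forall k : req, (narr s <= val k)%N -> now s + d <= atime k) ->
    (forall u v, cross_edge s u v -> load (grow_y s d) u v <= cost u v) ->
    step s (grow_result s d).

Inductive reachable : state -> Prop :=
| reach_init : reachable init_state
| reach_step s s' : reachable s -> step s s' -> reachable s'.

Definition waiting_cost (s : state) : R := \sum_(u : req) (mtime s u - atime u).

Definition sur_dual (s : state) : R := \sum_(S : {set req}) (sur S)%:R * yv s S.

End GreedyDual.

(* Main.v *)
Require Import Defs.
From HB Require Import structures.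
From mathcomp Require Import all_boot all_order all_algebra.
From mathcomp Require Import zify ring lra.
Set Implicit Arguments. Unset Strict Implicit. Unset Printing Implicit Defensive.
Import Order.TTheory GRing.Theory Num.Theory.
Local Open Scope ring_scope.

Section Proof.
Variables (R : realFieldType) (X : Type) (dist : X -> X -> R) (bip : bool) (m : nat)
  (pos : 'I_(2 * m) -> X) (atime : 'I_(2 * m) -> R) (sgn : 'I_(2 * m) -> int).
Local Notation req := 'I_(2 * m).
Local Notation st := (state R m).

Definition balanced (M : {set req}) : bool :=
  if bip then \sum_(x in M) sgn x == 0 else ~~ odd #|M|.

Definition W (s : st) : R :=
  \sum_(u in arrived s) ((if u \in freereq s then now s else mtime s u) - atime u).

Definition Inv (s : st) : Prop :=
  [/\ freereq s \subset arrived s,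
      (forall u, u \in arrived s -> [/\ u \in act s u, act s u \subset arrived s &
          forall w, w \in act s u -> act s w = act s u]),
      (forall u, u \in arrived s -> balanced (act s u :\: freereq s))
    & W s = sur_dual bip sgn s].

Lemma balancedU (A B : {set req}) : [disjoint A & B] -> balanced A -> balanced B ->
  balanced (A :|: B).
Proof.
move=> dAB; rewrite /balanced; case: bip.
  move=> /eqP HA /eqP HB.
  rewrite (eq_bigl [predU A & B]); last by move=> x; rewrite !inE.
  by rewrite bigU //= HA HB addr0.
rewrite cardsU (disjoint_setI0 dAB) cards0 subn0 oddD.
by move=> /negbTE -> /negbTE ->.
Qed.

Lemma balanced0 : balanced set0.
Proof. by rewrite /balanced big_set0 cards0; case: bip. Qed.

Lemma balanced2 u v : u != v -> sgn u = - sgn v -> balanced [set u; v].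
Proof.
move=> nuv suv; rewrite /balanced cards2 nuv big_setU1 ?big_set1 ?inE //.
case: bip => //; apply/eqP; change (sgn u + sgn v = 0); by rewrite suv addNr.
Qed.


Lemma sur_free (s : st) w :
  (if bip then forall u, sgn u = 1 \/ sgn u = -1 else forall u, sgn u = 0) ->
  Inv s -> ~ matchable sgn s -> w \in freereq s ->
  sur bip sgn (act s w) = #|act s w :&: freereq s|.
Proof.
move=> Hsg [Hfa Hpart Hbal _] Hnm wF.
have wa : w \in arrived s by apply: (subsetP Hfa).
have [wS Sa Hcl] := Hpart w wa.
have HF : forall x y, x \in act s w :&: freereq s -> y \in act s w :&: freereq s ->
    x != y -> sgn x <> - sgn y.
  move=> x y; rewrite !inE => /andP [xS xF] /andP [yS yF] nxy sxy.
  by apply: Hnm; exists x, y; split => //; rewrite (Hcl x xS) (Hcl y yS).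
have := Hbal w wa; rewrite /balanced /sur.
case: ifP Hsg => Hb Hsg.
  move=> /eqP HM.
  rewrite (big_setID (freereq s)) /= HM addr0.
  have Hc : forall x, x \in act s w :&: freereq s -> sgn x = sgn w.
    move=> x xF; have wF' : w \in act s w :&: freereq s by rewrite inE wS wF.
    case: (eqVneq x w) => [->//|nxw].
    have := HF x w xF wF' nxw.
    by case: (Hsg x) => ->; case: (Hsg w) => ->.
  rewrite (eq_bigr (fun _ => sgn w)) // sumr_const.
  rewrite -mulr_natr abszM.
  by rewrite natz; case: (Hsg w) => ->; rewrite /= mul1n.
move=> Hev.
have le1 : (#|act s w :&: freereq s| <= 1)%N.
  rewrite leqNgt; apply/negP => /card_gt1P [x [y [xF yF nxy]]].
  by apply: (HF x y xF yF nxy); rewrite !Hsg.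
rewrite -(cardsID (freereq s) (act s w)).
move: Hev le1; set a := #|_ :&: _|; set b := #|_ :\: _|.
move=> Hev le1; have := modn2 b; move: Hev; case: (odd b) => // _ Hbb.
lia.
Qed.

Lemma grow_sum (s : st) :
  (if bip then forall u, sgn u = 1 \/ sgn u = -1 else forall u, sgn u = 0) ->
  Inv s -> ~ matchable sgn s ->
  (\sum_(S | growing s S) sur bip sgn S = #|freereq s|)%N.
Proof.
move=> Hsg I Hnm; have I' := I; case: I' => [Hfa Hpart _ _].
rewrite -sum1_card (partition_big_imset (act s)) /=.
apply: eq_big.
- move=> S; apply/idP/idP.
  + case/andP => /existsP [u /andP [ua /eqP uS]] /existsP [w /andP [wF wS]].
    apply/imsetP; exists w => //.
    have [_ _ Hcl] := Hpart u ua.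
    by rewrite -uS Hcl // uS.
  + case/imsetP => w wF ->.
    have wa : w \in arrived s by apply: (subsetP Hfa).
    have [wS _ _] := Hpart w wa.
    by apply/andP; split; apply/existsP; exists w; rewrite ?wa ?wF ?eqxx ?wS.
- move=> S /andP [/existsP [u /andP [ua /eqP uS]] /existsP [w /andP [wF wS]]].
  have [_ _ Hclu] := Hpart u ua.
  have ->: S = act s w by rewrite -uS Hclu // uS.
  rewrite (sur_free Hsg I Hnm wF) -sum1_card.
  apply: eq_bigl => x; rewrite inE andbC.
  case xF: (x \in freereq s) => //=.
  have xa : x \in arrived s by apply: (subsetP Hfa).
  have wa : w \in arrived s by apply: (subsetP Hfa).
  have [xS _ _] := Hpart x xa.
  have [_ _ Hclw] := Hpart w wa.
  apply/idP/eqP => [xw|<-//].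
  exact: Hclw.
Qed.


Lemma disjP (A B : {set req}) : (forall x, x \in A -> x \in B -> False) -> [disjoint A & B].
Proof.
move=> H; rewrite -setI_eq0; apply/eqP/setP => x; rewrite !inE.
by apply/negP => /andP [xA xB]; apply: (H x).
Qed.

Lemma inv_init : Inv (init_state R m).
Proof.
have Ha : arrived (init_state R m) = set0 by apply/setP => x; rewrite !inE.
split.
- by rewrite /= sub0set.
- by move=> u; rewrite Ha inE.
- by move=> u; rewrite Ha inE.
- rewrite /W Ha big_set0 /sur_dual big1 // => S _ /=; by rewrite mulr0.
Qed.

Lemma inv_arrive s k : Inv s -> val k = narr s -> atime k = now s ->
  Inv (arrive_result s k).
Proof.
move=> [Hfa Hpart Hbal HW] Hk Ht.
have Ha : arrived (arrive_result s k) = k |: arrived s.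
  apply/setP => x; rewrite !inE /= ltnS leq_eqVlt -Hk val_eqE //.
have knot : k \notin arrived s by rewrite inE Hk ltnn.
have nk : forall x, x \in arrived s -> x != k.
  by move=> x xa; apply: contraNneq knot => <-.
split.
- by rewrite Ha /=; apply: setUS.
- move=> u; rewrite Ha in_setU1 => /orP [/eqP ->| ua]; rewrite /=.
  + rewrite eqxx; split; first by rewrite set11.
      by rewrite sub1set setU11.
    by move=> w; rewrite inE => /eqP ->; rewrite eqxx.
  + have [uS Sa Hcl] := Hpart u ua.
    rewrite (negbTE (nk u ua)); split => //.
      exact: subset_trans Sa (subsetU1 _ _).
    move=> w wS; have wa := subsetP Sa w wS.
    by rewrite (negbTE (nk w wa)) Hcl.
- move=> u; rewrite Ha in_setU1 => /orP [/eqP ->| ua]; rewrite /=.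
  + rewrite eqxx.
    have -> : [set k] :\: (k |: freereq s) = set0.
      by apply/setP => x; rewrite !inE; case: (x == k); rewrite ?andbF.
    exact: balanced0.
  + have [uS Sa Hcl] := Hpart u ua.
    rewrite (negbTE (nk u ua)).
    have -> : act s u :\: (k |: freereq s) = act s u :\: freereq s.
      apply/setP => x; rewrite !inE.
      case xS: (x \in act s u); rewrite ?andbF ?andbT //.
      by rewrite (negbTE (nk x (subsetP Sa x xS))).
    exact: Hbal.
- have -> : sur_dual bip sgn (arrive_result s k) = sur_dual bip sgn s by [].
  rewrite -HW /W Ha big_setU1 //= setU11 Ht subrr add0r.
  apply: eq_bigr => x xa; rewrite in_setU1 (negbTE (nk x xa)) //.
Qed.


Lemma inv_merge s u v : Inv s -> tight dist pos atime sgn s u v ->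
  Inv (merge_result s u v).
Proof.
move=> [Hfa Hpart Hbal HW] [[ua va _ nuv] _].
set S := act s u :|: act s v.
have [uS Sau Hclu] := Hpart u ua.
have [vS Sav Hclv] := Hpart v va.
have Hdis : [disjoint act s u & act s v].
  apply: disjP => x xu xv; move/eqP: nuv; apply.
  by rewrite -(Hclu x xu) (Hclv x xv).
have SA : S \subset arrived s by rewrite subUset Sau Sav.
have Ha : arrived (merge_result s u v) = arrived s by [].
have Hf : freereq (merge_result s u v) = freereq s by [].
have Hact : act (merge_result s u v) = fun w => if w \in S then S else act s w by [].
have notS : forall w, w \in arrived s -> w \notin S -> forall x, x \in act s w -> x \notin S.
  move=> w wa wnS x xw; have [wS _ Hclw] := Hpart w wa.
  apply: contra wnS; rewrite !inE => /orP [xu|xv].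
    by rewrite -(Hclu x xu) (Hclw x xw) wS.
  by rewrite -(Hclv x xv) (Hclw x xw) wS orbT.
split.
- by rewrite Hf Ha.
- move=> w; rewrite Ha Hact => wa; case wS: (w \in S).
    by split => // x xS; rewrite xS.
  have [wa1 Saw Hclw] := Hpart w wa.
  split => // x xw.
  by rewrite (negbTE (notS w wa (negbT wS) x xw)); exact: Hclw.
- move=> w; rewrite Ha Hact Hf => wa; case wS: (w \in S).
    rewrite setDUl; apply: balancedU; [|exact: Hbal|exact: Hbal].
    apply: disjP => x; rewrite !inE => /andP [_ xu] /andP [_ xv].
    by move: Hdis; rewrite -setI_eq0 => /eqP /setP /(_ x); rewrite !inE xu xv.
  exact: Hbal.
- exact: HW.
Qed.

Lemma inv_match s u v : Inv s -> can_match sgn s u v -> Inv (match_result s u v).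
Proof.
move=> [Hfa Hpart Hbal HW] [uF vF nuv suv auv].
have ua : u \in arrived s by apply: (subsetP Hfa).
have va : v \in arrived s by apply: (subsetP Hfa).
have Hf : freereq (match_result s u v) = freereq s :\ u :\ v by [].
split.
- rewrite Hf; apply/subsetP => x /setD1P [_ /setD1P [_ xF]].
  exact: (subsetP Hfa).
- exact: Hpart.
- move=> w wa; rewrite Hf /=.
  have [wS Saw Hclw] := Hpart w wa.
  have [uS _ _] := Hpart u ua.
  have [vS _ _] := Hpart v va.
  case uw: (u \in act s w).
    have Hu : act s u = act s w := Hclw u uw.
    have vw : v \in act s w by rewrite -Hu auv.
    have -> : act s w :\: (freereq s :\ u :\ v) = (act s w :\: freereq s) :|: [set u; v].
      apply/setP => x; rewrite !inE.
      case: (eqVneq x v) => [->|xv]; first by rewrite vw /= !orbT.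
      case: (eqVneq x u) => [->|xu]; first by rewrite uw /= !orbT.
      by rewrite /= !orbF andbC.
    apply: balancedU; last exact: balanced2.
      apply: disjP => x; rewrite !inE => /andP [xnF _] /orP [] /eqP xe.
        by rewrite xe uF in xnF.
      by rewrite xe vF in xnF.
    exact: Hbal.
  have vw : v \notin act s w.
    apply/negP => vw; have Hv : act s v = act s w := Hclw v vw.
    by rewrite -Hv -auv uS in uw.
  have -> : act s w :\: (freereq s :\ u :\ v) = act s w :\: freereq s.
    apply/setP => x; rewrite !inE.
    case xw: (x \in act s w); rewrite ?andbF ?andbT //.
    have xu : x != u by apply: contraFneq uw => <-.
    have xv : x != v by apply: contraNneq vw => <-.
    by rewrite xu xv.
  exact: Hbal.
- have -> : sur_dual bip sgn (match_result s u v) = sur_dual bip sgn s by [].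
  rewrite -HW /W Hf; apply: eq_bigr => x xa /=; rewrite !inE.
  case: (eqVneq x v) => [->|xv]; first by rewrite vF orbT.
  case: (eqVneq x u) => [->|xu]; first by rewrite uF.
  by [].
Qed.


Lemma inv_grow s d :
  (if bip then forall u, sgn u = 1 \/ sgn u = -1 else forall u, sgn u = 0) ->
  Inv s -> ~ matchable sgn s -> Inv (grow_result s d).
Proof.
move=> Hsg I Hnm; have I' := I; case: I' => [Hfa Hpart Hbal HW]; split => //.
rewrite /W /sur_dual /=.
rewrite (eq_bigr (fun x => ((if x \in freereq s then now s else mtime s x) - atime x)
   + (if x \in freereq s then d else 0))); last first.
  by move=> x _; case: (x \in freereq s); rewrite ?addr0 // addrAC.
rewrite big_split /= -/(W s) HW.
rewrite [RHS](eq_bigr (fun S => (sur bip sgn S)%:R * yv s S +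
   (if growing s S then (sur bip sgn S)%:R * d else 0))); last first.
  by move=> S _; rewrite /grow_y; case: (growing s S); rewrite ?addr0 // mulrDr.
rewrite big_split /=; congr (_ + _).

rewrite -big_mkcond /= -mulr_suml -natr_sum grow_sum //.
rewrite (big_setID (freereq s)) /= (setIidPr Hfa).
rewrite (eq_bigr (fun _ => d)); last by move=> x xF; rewrite xF.
rewrite [X in _ + X]big1; last by move=> x; rewrite inE => /andP [/negbTE -> _].
by rewrite addr0 sumr_const mulr_natl.
Qed.

Lemma reach_inv s : valid_instance bip atime sgn ->
  reachable dist pos atime sgn s -> Inv s.
Proof.
move=> Hval; have Hsg : if bip then (forall u, sgn u = 1 \/ sgn u = -1)
    else forall u, sgn u = 0.
  by case: Hval => _ _; case: bip => // [[]].
elim=> [|s0 s1 _ I0 st]; first exact: inv_init.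
case: st I0.
- by move=> s2 k _ Hk Ht I0; apply: inv_arrive.
- by move=> s2 u v _ Ht I0; apply: inv_merge.
- by move=> s2 u v Hc I0; apply: inv_match.
- by move=> s2 d _ Hnm _ _ _ I0; apply: inv_grow.
Qed.

Lemma final :
  is_metric dist ->
  valid_instance bip atime sgn ->
  forall (s : state R m) (u v : 'I_(2 * m)),
    reachable dist pos atime sgn s ->
    can_match sgn s u v ->
    let s' := match_result s u v in
    arrived s' = [set: 'I_(2 * m)] ->
    freereq s' = set0 ->
    waiting_cost atime s' = sur_dual bip sgn s'.
Proof.
move=> _ Hval s u v Hr Hcm s' Harr Hfree.
have [_ _ _ HW] := inv_match (reach_inv Hval Hr) Hcm.
rewrite -HW /W -/s' Harr Hfree /waiting_cost.
by apply: eq_big => [x|x _]; rewrite !inE.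
Qed.

End Proof.

Theorem lemma5 (R : realFieldType) (X : Type) (dist : X -> X -> R) (bip : bool)
    (m : nat) (pos : 'I_(2 * m) -> X) (atime : 'I_(2 * m) -> R)
    (sgn : 'I_(2 * m) -> int) :
  is_metric dist ->
  valid_instance bip atime sgn ->
  forall (s : state R m) (u v : 'I_(2 * m)),
    reachable dist pos atime sgn s ->
    can_match sgn s u v ->
    let s' := match_result s u v in
    arrived s' = [set: 'I_(2 * m)] ->
    freereq s' = set0 ->
    waiting_cost atime s' = sur_dual bip sgn s'.
Proof. exact: (@final R X dist bip m pos atime sgn). Qed.
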